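(* Let $X$ be a real topological vector space, let $C$ be a convex subset of $X$, and let $f:X\times X\to\mathbb{R}$ be a bifunction such that $f(x,\cdot)$ is quasi-convex for each $x\in X$. If $f$ is cyclically quasi-monotone on $C$, then $f$ is properly quasi-monotone on $C$.
   Context: A function $h:X\to\mathbb{R}$ is quasi-convex if all its sublevel sets $\{x: h(x)\leq\lambda\}$ are convex. The bifunction $f$ is cyclically quasi-monotone on $C$ if for every $n\in\mathbb{N}$ and all $x_0,\dots,x_n\in C$ there is $i\in\{0,\dots,n\}$ with $f(x_i,x_{i+1})\leq0$, where $x_{n+1}:=x_0$. It is properly quasi-monotone on $C$ if for every finite non-empty $A\subset C$ and every $x\in\operatorname{co}(A)$ one has $\min_{a\in A}f(a,x)\leq0$. *)

(* Defs.v *)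
From HB Require Import structures.
From mathcomp Require Import all_boot all_order all_algebra.
From mathcomp Require Import all_classical all_reals.
From mathcomp Require Import topology tvs.
Set Implicit Arguments. Unset Strict Implicit. Unset Printing Implicit Defensive.
Import Order.TTheory GRing.Theory Num.Theory.
Local Open Scope classical_set_scope.
Local Open Scope ring_scope.

Section Defs.
Variables (R : realType) (X : topologicalLmodType R).

Definition convex (A : set X) : Prop :=
  forall x y (t : R), 0 <= t -> t <= 1 -> A x -> A y -> A (t *: x + (1 - t) *: y).

Definition co (A : set X) : set X :=
  fun x => forall B : set X, convex B -> A `<=` B -> B x.

Definition quasi_convex (h : X -> R) : Prop :=
  forall lam : R, convex [set x | h x <= lam].

Definition cyclically_quasi_monotone (f : X -> X -> R) (C : set X) : Prop :=
  forall (n : nat) (x : nat -> X), (forall i, (i <= n)%N -> C (x i)) ->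
    exists2 i, (i <= n)%N & f (x i) (x (if i == n then 0%N else i.+1)) <= 0.

(* proper quasi-monotonicity on C: min_{a in A} f(a,x) <= 0, i.e. some a in A
   has f(a,x) <= 0 (A finite and non-empty, so the min is attained). *)
Definition properly_quasi_monotone (f : X -> X -> R) (C : set X) : Prop :=
  forall A : set X, finite_set A -> A !=set0 -> A `<=` C ->
    forall x, co A x -> exists2 a, A a & f a x <= 0.

End Defs.

(* Main.v *)
Require Import Defs.
From HB Require Import structures.
From mathcomp Require Import all_boot all_order all_algebra.
From mathcomp Require Import all_classical all_reals.
From mathcomp Require Import topology tvs.
From mathcomp Require Import zify.
Import Order.TTheory GRing.Theory Num.Theory.
Local Open Scope classical_set_scope.
Local Open Scope ring_scope.

Lemma sink_exists (T : eqType) (s : seq T) (P : T -> T -> Prop) :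
  (forall (n : nat) (y : nat -> T), (forall i, (i <= n)%N -> y i \in s) ->
     exists2 i, (i <= n)%N & ~ P (y i) (y (if i == n then 0%N else i.+1))) ->
  forall a0, a0 \in s -> exists2 a, a \in s & forall b, b \in s -> ~ P a b.
Proof.
move=> acyc a0 a0s.
apply: contrapT => nosink.
have H : forall a, exists b, a \in s -> b \in s /\ P a b.
  move=> a; have [as_|nas] := boolP (a \in s); last by exists a.
  apply: contrapT => nb; apply: nosink; exists a => // b bs Pab.
  by apply: nb; exists b.
have [g Hg] := choice H.
pose x i := iter i g a0.
have xs : forall i, x i \in s.
  by elim=> [|i IH] //=; have [] := Hg _ IH.
have nu : ~~ uniq (mkseq x (size s).+1).
  apply/negP => u.
  have sub : {subset mkseq x (size s).+1 <= s} by move=> z /mapP [i _ ->].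
  by have := uniq_leq_size u sub; rewrite size_mkseq ltnn.
case/(uniqPn a0): nu => i [j [ij]]; rewrite size_mkseq => jlt.
rewrite !nth_mkseq // ?(ltn_trans ij jlt) // => exij.
have [k kn] := acyc (j - i.+1)%N (fun k => x (i + k)%N) (fun k _ => xs _).
apply.
have -> : x (i + (if k == (j - i.+1)%N then 0%N else k.+1))%N = g (x (i + k)%N).
  case: eqP => [->|_].
    rewrite addn0 exij.
    have E : j = (i + (j - i.+1)).+1 by lia.
    by rewrite {1}E.
  by rewrite addnS.
by have [] := Hg _ (xs (i + k)%N).
Qed.

Theorem proposition3p3 (R : realType) (X : topologicalLmodType R) (C : set X)
    (f : X -> X -> R) :
  convex C ->
  (forall x : X, quasi_convex (f x)) ->
  cyclically_quasi_monotone f C ->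
  properly_quasi_monotone f C.
Proof.
move=> _ qc cqm A /finite_seqP [s ->] [a0 a0s] AC x cox.
have [a as_ Ha] : exists2 a, a \in s & forall b, b \in s -> ~ (0 < f a b).
  apply: (@sink_exists _ s (fun a b => 0 < f a b) _ a0 a0s).
  move=> n y ys.
  have [i ilen fle] := cqm n y (fun i ilen => AC _ (ys i ilen)).
  by exists i => //; rewrite ltNge fle.
exists a => //.
have Hs : [set` s] `<=` [set y | f a y <= 0].
  move=> b /= bs.
  by rewrite leNgt; apply/negP; apply: Ha.
exact: (cox _ (qc a 0) Hs).
Qed.
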